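(* Let $\mathcal{A}$ be a finite totally ordered alphabet and let $\mathbf{Ch}(\mathcal{A})$ be the Chinese monoid over $\mathcal{A}$. Then $\mathbf{Ch}(\mathcal{A})$ is of type 1: for every function $\sigma:\mathcal{A}\to\mathbb{N}_{\geq 2}$, the map $\phi_\sigma=\theta\times\operatorname{ev}_\sigma:\mathbf{Ch}(\mathcal{A},\sigma)\to \mathbf{Ch}(\mathcal{A},2)\times\mathbf{Com}(\mathcal{A},\sigma)$ is injective.
   Context: The Chinese monoid $\mathbf{Ch}(\mathcal{A})$ is the quotient of the free monoid $\mathcal{A}^*$ by the relations $cba=cab=bca$ for $a<b<c$, and $aba=baa$, $bba=bab$ for $a<b$ ($a,b,c\in\mathcal{A}$). For $\sigma:\mathcal{A}\to\mathbb{N}_{\geq2}$, $\mathbf{Ch}(\mathcal{A},\sigma)$ is the quotient of $\mathbf{Ch}(\mathcal{A})$ obtained by adding the relations $a^{\sigma(a)}=a$ for every $a\in\mathcal{A}$; $\mathbf{Ch}(\mathcal{A},2)$ is the case where $\sigma$ is constant equal to $2$. $\mathbf{Com}(\mathcal{A},\sigma)$ is the quotient of the free commutative monoid on $\mathcal{A}$ by the relations $a^{\sigma(a)}=a$, $a\in\mathcal{A}$. The maps $\theta:\mathbf{Ch}(\mathcal{A},\sigma)\to\mathbf{Ch}(\mathcal{A},2)$ and $\operatorname{ev}_\sigma:\mathbf{Ch}(\mathcal{A},\sigma)\to\mathbf{Com}(\mathcal{A},\sigma)$ are the natural surjective morphisms (induced by the identity on $\mathcal{A}$), and $\phi_\sigma(x)=(\theta(x),\operatorname{ev}_\sigma(x))$.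 *)

(* Defs.v *)
From mathcomp Require Import all_boot all_order.
Set Implicit Arguments. Unset Strict Implicit. Unset Printing Implicit Defensive.
Import Order.TTheory.
Local Open Scope order_scope.

(* Monoids presented as quotients of the free monoid seq A by the congruence
   generated by a set of defining relations R (pairs of words). *)
Section Pres.
Variable A : Type.
Variable R : seq A -> seq A -> Prop.

Inductive cong : seq A -> seq A -> Prop :=
| cong_step u v l r : R l r -> cong (u ++ l ++ v) (u ++ r ++ v)
| cong_refl x : cong x x
| cong_sym x y : cong x y -> cong y x
| cong_trans x y z : cong x y -> cong y z -> cong x z.
End Pres.

Section Chinese.
Variables (d : Order.disp_t) (A : finOrderType d).

Inductive ch_rel : seq A -> seq A -> Prop :=
| ch_cba_cab a b c : a < b -> b < c -> ch_rel [:: c; b; a] [:: c; a; b]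
| ch_cab_bca a b c : a < b -> b < c -> ch_rel [:: c; a; b] [:: b; c; a]
| ch_aba_baa a b : a < b -> ch_rel [:: a; b; a] [:: b; a; a]
| ch_bba_bab a b : a < b -> ch_rel [:: b; b; a] [:: b; a; b].

Inductive pow_rel (sigma : A -> nat) : seq A -> seq A -> Prop :=
| pow_r a : pow_rel sigma (nseq (sigma a) a) [:: a].

Definition chs_rel (sigma : A -> nat) (x y : seq A) : Prop :=
  ch_rel x y \/ pow_rel sigma x y.

Inductive comm_rel : seq A -> seq A -> Prop :=
| comm_r a b : comm_rel [:: a; b] [:: b; a].

Definition com_rel (sigma : A -> nat) (x y : seq A) : Prop :=
  comm_rel x y \/ pow_rel sigma x y.

Definition ChEq (sigma : A -> nat) := cong (chs_rel sigma).
Definition Ch2Eq := cong (chs_rel (fun _ => 2%N)).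
Definition ComEq (sigma : A -> nat) := cong (com_rel sigma).
End Chinese.

(* Main.v *)
Require Import Defs.
From mathcomp Require Import all_boot all_order.
From mathcomp Require Import zify.
Set Implicit Arguments. Unset Strict Implicit. Unset Printing Implicit Defensive.
Import Order.TTheory.

Section Main.
Variables (d : Order.disp_t) (A : finOrderType d) (sigma : A -> nat).
Hypothesis hs : forall a : A, (2 <= sigma a)%N.

Local Notation E := (ChEq sigma).
Implicit Types (a b c x y z : A) (u v w p q l r s t : seq A).

Lemma Erefl w : E w w. Proof. exact: cong_refl. Qed.
Lemma Esym u v : E u v -> E v u. Proof. exact: cong_sym. Qed.
Lemma Etr v u w : E u v -> E v w -> E u w. Proof. exact: cong_trans. Qed.

Lemma Ectx p q u v : E u v -> E (p ++ u ++ q) (p ++ v ++ q).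
Proof.
elim=> [u0 v0 l r H| x|x y _ IH|x y z _ IH1 _ IH2].
- by have := cong_step (p ++ u0) (v0 ++ q) H; rewrite -!catA.
- exact: Erefl.
- exact: Esym.
- exact: Etr IH2.
Qed.

Lemma Ecat u v u' v' : E u v -> E u' v' -> E (u ++ u') (v ++ v').
Proof.
move=> H1 H2; apply: (@Etr (v ++ u')).
  by have := Ectx [::] u' H1; rewrite /= .
by have := Ectx v [::] H2; rewrite !cats0.
Qed.

Lemma Econs c u v : E u v -> E (c :: u) (c :: v).
Proof. by move=> H; have := Ectx [:: c] [::] H; rewrite /= !cats0. Qed.

Lemma Ecatl p u v : E u v -> E (p ++ u) (p ++ v).
Proof. by move=> H; have := Ectx p [::] H; rewrite !cats0. Qed.
Lemma Ecatr q u v : E u v -> E (u ++ q) (v ++ q).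
Proof. by move=> H; have := Ectx [::] q H. Qed.

Lemma R1 a b c : (a < b)%O -> (b < c)%O -> E [:: c; b; a] [:: c; a; b].
Proof. move=> h1 h2; have := @cong_step _ (chs_rel sigma) [::] [::] _ _ (or_introl (ch_cba_cab h1 h2)); by rewrite /=. Qed.
Lemma R2 a b c : (a < b)%O -> (b < c)%O -> E [:: c; a; b] [:: b; c; a].
Proof. move=> h1 h2; have := @cong_step _ (chs_rel sigma) [::] [::] _ _ (or_introl (ch_cab_bca h1 h2)); by rewrite /=. Qed.
Lemma R3 a b : (a < b)%O -> E [:: a; b; a] [:: b; a; a].
Proof. move=> h1; have := @cong_step _ (chs_rel sigma) [::] [::] _ _ (or_introl (ch_aba_baa h1)); by rewrite /=. Qed.
Lemma R4 a b : (a < b)%O -> E [:: b; b; a] [:: b; a; b].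
Proof. move=> h1; have := @cong_step _ (chs_rel sigma) [::] [::] _ _ (or_introl (ch_bba_bab h1)); by rewrite /=. Qed.
Lemma RP a : E (nseq (sigma a) a) [:: a].
Proof. have := @cong_step _ (chs_rel sigma) [::] [::] _ _ (or_intror (pow_r sigma a)); by rewrite /= !cats0. Qed.

Lemma absL a w : E (nseq (sigma a).-1 a ++ a :: w) (a :: w).
Proof.
have -> : nseq (sigma a).-1 a ++ a :: w = nseq (sigma a) a ++ w.
  have h := hs a; rewrite -cat1s catA -[[:: a]]/(nseq 1 a) -nseqD addn1 prednK //.
  exact: leq_trans h.
by have := Ecatr w (RP a).
Qed.

Lemma Eeq u u' v v' : u = u' -> v = v' -> E u' v' -> E u v.
Proof. by move=> -> ->. Qed.

Lemma sig2 a : nseq (sigma a) a = nseq (sigma a - 2) a ++ [:: a; a].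
Proof.
have h := hs a; rewrite -[[:: a; a]]/(nseq 2 a) -nseqD subnK //.
Qed.

Lemma cancelL a w w' : E (a :: a :: w) (a :: a :: w') -> E (a :: w) (a :: w').
Proof.
move=> H.
apply: (@Etr (nseq (sigma a) a ++ w)); first by apply: Esym; have := Ecatr w (RP a).
apply: (@Etr (nseq (sigma a) a ++ w')); last by have := Ecatr w' (RP a).
rewrite sig2 -!catA; exact: Ecatl.
Qed.

Lemma cancelR a w w' : E (w ++ [:: a; a]) (w' ++ [:: a; a]) -> E (w ++ [:: a]) (w' ++ [:: a]).
Proof.
move=> H.
apply: (@Etr (w ++ nseq (sigma a) a)); first by apply: Esym; have := Ecatl w (RP a).
apply: (@Etr (w' ++ nseq (sigma a) a)); last by have := Ecatl w' (RP a).
have e : forall zz : seq A, zz ++ nseq (sigma a) a = (zz ++ [:: a; a]) ++ nseq (sigma a - 2) a.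
  by move=> zz; rewrite -catA -[[:: a; a]]/(nseq 2 a) -nseqD addnC subnK // hs.
rewrite !e; exact: Ecatr.
Qed.

Lemma push a y : (a < y)%O -> forall n xs, size xs = n.+1 -> all (fun x => (x < a)%O) xs ->
  exists p x, [/\ (x < a)%O, size p = n & E (y :: xs) (p ++ [:: y; x])].
Proof.
move=> ay; elim=> [|n IH] xs.
  case: xs => [|x [|]] //= _; rewrite andbT => xa.
  by exists [::], x; split => //; exact: Erefl.
case: xs => [|x1 [|x2 xs]] //= [sz] /and3P [x1a x2a xsa].
have [x' [x'' [x''a H3]]] : exists x' x'', (x'' < a)%O /\ E [:: y; x1; x2] [:: x'; y; x''].
  have x1y : (x1 < y)%O by apply: lt_trans ay.
  have x2y : (x2 < y)%O by apply: lt_trans ay.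
  case: (ltgtP x1 x2) => [h|h|<-].
  - by exists x2, x1; split => //; exact: R2.
  - exists x1, x2; split => //; apply: (@Etr [:: y; x2; x1]); first exact: R1.
    exact: R2.
  - by exists x1, x1; split => //; apply: Esym; exact: R3.
have [p [x [xa sp Hp]]] := IH (x'' :: xs) (congr1 S sz) (introT andP (conj x''a xsa)).
exists (x' :: p), x; split => //=; first by rewrite sp.
apply: (@Etr (x' :: y :: x'' :: xs)).
  by have := Ectx [::] xs H3.
exact: Econs.
Qed.

Lemma decomp a u : a \notin u -> all (fun x => (x < a)%O) u \/
  exists u1 y xs, [/\ u = u1 ++ y :: xs, (a < y)%O & all (fun x => (x < a)%O) xs].
Proof.
elim/last_ind: u => [|u z IH]; first by left.
rewrite -cats1 mem_cat mem_seq1 negb_or => /andP [nu nz].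
case: (ltgtP z a) => [za|az|e]; last by rewrite e eqxx in nz.
- case: (IH nu) => [al|[u1 [y [xs [-> ay xsa]]]]].
    by left; rewrite all_cat al /= za.
  right; exists u1, y, (xs ++ [:: z]); split => //; first by rewrite -catA.
  by rewrite all_cat xsa /= za.
- by right; exists u, z, [::].
Qed.


Lemma indep a : forall n u, size u <= n -> E (a :: a :: u ++ [:: a]) (a :: u ++ [:: a; a]).
Proof.
elim=> [|n IH] u.
  by rewrite leqn0 size_eq0 => /eqP ->; exact: Erefl.
move=> su.
case: (boolP (a \in u)) => [au|nau].
  case/splitPr: au su => u1 u2; rewrite size_cat /= addnS ltnS => su.
  have s1 : size u1 <= n by apply: leq_trans (leq_addr _ _) su.
  have s2 : size u2 <= n by apply: leq_trans (leq_addl _ _) su.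
  apply: (@Etr (a :: u1 ++ a :: a :: u2 ++ [:: a])).
    apply: (@Eeq _ ((a :: a :: u1 ++ [:: a]) ++ (u2 ++ [:: a])) _ ((a :: u1 ++ [:: a; a]) ++ (u2 ++ [:: a]))); try by rewrite /= -?catA.
    exact: Ecatr (IH _ s1).
  apply: (@Eeq _ ((a :: u1) ++ (a :: a :: u2 ++ [:: a])) _ ((a :: u1) ++ (a :: u2 ++ [:: a; a]))); try by rewrite /= -?catA.
  exact: Ecatl (IH _ s2).
case: u su nau => [|z u'] su nau; first exact: Erefl.
case: u' su nau => [|z2 u''] su nau.
  rewrite mem_seq1 in nau; case: (ltgtP z a) => [za|az|e]; last by rewrite e eqxx in nau.
  - by have := Ectx [::] [:: a] (R4 za).
  - exact: Econs (R3 az).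
move: su nau; set u := z :: z2 :: u'' => su nau.
have su2 : 2 <= size u by [].
have n1 : size [:: z] <= n by move: su; rewrite /u /=; lia.
case: (decomp nau) => [al | [u1 [y [xs [eu ay xsa]]]]].
-
  have za : (z < a)%O by move: al => /= /andP [].
  have s' : size (z2 :: u'') <= n by [].
  apply: cancelL.
  apply: (@Etr (a :: a :: z :: a :: (z2 :: u'') ++ [:: a])).
    by have := Ectx [:: a] ((z2 :: u'') ++ [:: a]) (R4 za).
  apply: (@Etr (a :: z :: a :: a :: (z2 :: u'') ++ [:: a])).
    by have := Ecatr ((z2 :: u'') ++ [:: a]) (IH [:: z] n1).
  apply: (@Etr (a :: z :: a :: (z2 :: u'') ++ [:: a; a])).
    by have := Ecatl [:: a; z] (IH _ s').
  by have := Ectx [::] ((z2 :: u'') ++ [:: a; a]) (Esym (R4 za)).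
- case: xs eu xsa => [|x1 xs] eu xsa.
  +
    have s1 : size u1 <= n.
      by move: su; rewrite eu size_cat /= addn1 ltnS.
    rewrite eu.
    apply: (@Eeq _ ((a :: a :: u1 ++ [:: y]) ++ [:: a]) _ ((a :: u1 ++ [:: y; a]) ++ [:: a])); try by rewrite /= -?catA.
    apply: cancelR.
    apply: (@Etr ((a :: a :: u1) ++ [:: a; y; a])).
      apply: (@Eeq _ ((a :: a :: u1) ++ [:: y; a; a] ++ [::]) _ ((a :: a :: u1) ++ [:: a; y; a] ++ [::])); try by rewrite /= -?catA.
      exact: Ectx (Esym (R3 ay)).
    apply: (@Etr ((a :: u1 ++ [:: a; a]) ++ [:: y; a])).
      apply: (@Eeq _ ((a :: a :: u1 ++ [:: a]) ++ [:: y; a]) _ ((a :: u1 ++ [:: a; a]) ++ [:: y; a])); try by rewrite /= -?catA.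
      exact: Ecatr (IH _ s1).
    apply: (@Etr ((a :: u1) ++ [:: a; y; a; a])).
      apply: (@Eeq _ ((a :: u1) ++ [:: a; a; y; a]) _ ((a :: u1) ++ [:: a; y; a; a])); try by rewrite /= -?catA.
      exact: Ecatl (IH [:: y] n1).
    apply: (@Eeq _ ((a :: u1) ++ [:: a; y; a] ++ [:: a]) _ ((a :: u1) ++ [:: y; a; a] ++ [:: a])); try by rewrite /= -?catA.
    exact: Ectx (R3 ay).
  +
    have [p [x [xa sp Hp]]] := push ay (erefl (size (x1 :: xs))) xsa.
    have sP : size (u1 ++ p) <= n.
      by move: su; rewrite eu !size_cat sp /= addnS ltnS; apply: leq_trans; rewrite leq_add2l.
    have Hu : E u ((u1 ++ p) ++ [:: y; x]) by rewrite eu -catA; exact: Ecatl Hp.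
    have Hyxa : E [:: y; x; a] [:: a; y; x] by exact: R2.
    apply: (@Etr (a :: a :: (u1 ++ p) ++ [:: y; x; a])).
      apply: (@Eeq _ ([:: a; a] ++ u ++ [:: a]) _ ([:: a; a] ++ ((u1 ++ p) ++ [:: y; x]) ++ [:: a])); try by rewrite /= -?catA.
      exact: Ectx.
    apply: (@Etr (a :: a :: (u1 ++ p) ++ [:: a; y; x])).
      apply: (@Eeq _ ((a :: a :: (u1 ++ p)) ++ [:: y; x; a] ++ [::]) _ ((a :: a :: (u1 ++ p)) ++ [:: a; y; x] ++ [::])); try by rewrite /= -?catA.
      exact: Ectx.
    apply: (@Etr (a :: (u1 ++ p) ++ [:: a; a; y; x])).
      apply: (@Eeq _ ((a :: a :: (u1 ++ p) ++ [:: a]) ++ [:: y; x]) _ ((a :: (u1 ++ p) ++ [:: a; a]) ++ [:: y; x])); try by rewrite /= -?catA.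
      exact: Ecatr (IH _ sP).
    apply: (@Etr (a :: (u1 ++ p) ++ [:: a; y; x; a])).
      apply: (@Eeq _ ((a :: (u1 ++ p) ++ [:: a]) ++ [:: a; y; x] ++ [::]) _ ((a :: (u1 ++ p) ++ [:: a]) ++ [:: y; x; a] ++ [::])); try by rewrite /= -?catA.
      exact: Ectx (Esym Hyxa).
    apply: (@Etr (a :: (u1 ++ p) ++ [:: y; x; a; a])).
      apply: (@Eeq _ ((a :: (u1 ++ p)) ++ [:: a; y; x] ++ [:: a]) _ ((a :: (u1 ++ p)) ++ [:: y; x; a] ++ [:: a])); try by rewrite /= -?catA.
      exact: Ectx (Esym Hyxa).
    apply: (@Eeq _ ([:: a] ++ ((u1 ++ p) ++ [:: y; x]) ++ [:: a; a]) _ ([:: a] ++ u ++ [:: a; a])); try by rewrite /= -?catA.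
    exact: Ectx (Esym Hu).
Qed.


Lemma dbl_move a p m q : E (p ++ a :: a :: m ++ a :: q) (p ++ a :: m ++ a :: a :: q).
Proof.
apply: (@Eeq _ (p ++ (a :: a :: m ++ [:: a]) ++ q) _ (p ++ (a :: m ++ [:: a; a]) ++ q)); try by rewrite /= -?catA.
exact: Ectx (@indep a _ m (leqnn _)).
Qed.

Lemma split_eq (a : A) p q p' q' : p ++ a :: q = p' ++ a :: q' -> size p < size p' ->
  exists m, p' = p ++ a :: m /\ q = m ++ a :: q'.
Proof.
elim: p p' => [|z p IH] [|z' p'] //=.
  by move=> [<- ->] _; exists p'.
move=> [<- e]; rewrite ltnS => sp.
by have [m [-> ->]] := IH _ e sp; exists m.
Qed.

Lemma occ2 a p q p' q' : p ++ a :: q = p' ++ a :: q' -> E (p ++ a :: a :: q) (p' ++ a :: a :: q').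
Proof.
move=> e; case: (ltngtP (size p) (size p')) => h.
- have [m [-> ->]] := split_eq e h; rewrite -catA /=; exact: dbl_move.
- have [m [-> ->]] := split_eq (esym e) h; rewrite -catA /=; apply: Esym; exact: dbl_move.
- move: e => /eqP; rewrite eqseq_cat // => /andP [/eqP -> /eqP [->]]; exact: Erefl.
Qed.

Definition ins a w := if a \in w then take (index a w) w ++ a :: drop (index a w) w else w.

Lemma ins_notin a w : a \notin w -> ins a w = w.
Proof. by rewrite /ins => /negbTE ->. Qed.

Lemma ins_decomp a w : a \in w -> exists p q, w = p ++ a :: q /\ ins a w = p ++ a :: a :: q.
Proof.
move=> aw; rewrite /ins aw.
have hi : index a w < size w by rewrite index_mem.
exists (take (index a w) w), (drop (index a w).+1 w).
have ed : drop (index a w) w = a :: drop (index a w).+1 w by rewrite (drop_nth a hi) nth_index.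
by rewrite ed -ed cat_take_drop.
Qed.

Lemma ins_occ a p q : E (ins a (p ++ a :: q)) (p ++ a :: a :: q).
Proof.
have aw : a \in p ++ a :: q by rewrite mem_cat mem_head orbT.
have [p' [q' [e ->]]] := ins_decomp aw; exact: occ2 (esym e).
Qed.

Lemma ins_perm a w : a \in w -> perm_eq (ins a w) (a :: w).
Proof.
move=> aw; have [p [q [e ->]]] := ins_decomp aw; rewrite e.
by rewrite -(cat1s a (a :: q)) perm_catCA.
Qed.

Lemma ins_mem a b w : (b \in ins a w) = (b \in w).
Proof.
case: (boolP (a \in w)) => aw; last by rewrite ins_notin.
rewrite (perm_mem (ins_perm aw)) in_cons.
by case: eqP => // ->; rewrite aw.
Qed.

Lemma ins_count a b w : count_mem b (ins a w) = count_mem b w + (b == a) * (a \in w).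
Proof.
case: (boolP (a \in w)) => aw; last by rewrite ins_notin // muln0 addn0.
by rewrite (permP (ins_perm aw)) /= addnC muln1 eq_sym.
Qed.


Lemma Estep u v l r : chs_rel sigma l r -> E (u ++ l ++ v) (u ++ r ++ v).
Proof. exact: cong_step. Qed.

Lemma coreI a b c : (a < b)%O -> (b < c)%O -> E [:: c; a; b; a] [:: c; a; a; b].
Proof.
move=> ab bc; have ac := lt_trans ab bc.
apply: cancelL.
apply: (@Etr [:: c; a; c; b; a]); first exact: (Ectx [::] [:: b; a] (R4 ac)).
apply: (@Etr [:: c; a; c; a; b]); first exact: (Ectx [:: c; a] [::] (R1 ab bc)).
exact: (Ectx [::] [:: a; b] (Esym (R4 ac))).
Qed.

Lemma locI a b c : (a < b)%O -> (b < c)%O -> E [:: c; b; a; a] [:: c; a; a; b].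
Proof.
move=> ab bc; apply: (@Etr [:: c; a; b; a]); first exact: (Ectx [::] [:: a] (R1 ab bc)).
exact: coreI.
Qed.

Lemma locII a b c : (a < b)%O -> (b < c)%O -> E [:: c; c; a; b] [:: b; c; c; a].
Proof.
move=> ab bc; have ac := lt_trans ab bc.
apply: (@Etr [:: c; b; c; a]); first exact: (Ectx [:: c] [::] (R2 ab bc)).
apply: (@cancelR a [:: c; b; c] [:: b; c; c]).
apply: (@Etr [:: c; b; a; c; a]); first exact: (Ectx [:: c; b] [::] (Esym (R3 ac))).
apply: (@Etr [:: c; a; b; c; a]); first exact: (Ectx [::] [:: c; a] (R1 ab bc)).
apply: (@Etr [:: b; c; a; c; a]); first exact: (Ectx [::] [:: c; a] (R2 ab bc)).
exact: (Ectx [:: b; c] [::] (R3 ac)).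
Qed.

Lemma locIII a b c : (a < b)%O -> (b < c)%O -> E [:: c; a; a; b] [:: b; c; a; a].
Proof.
move=> ab bc; apply: (@Etr [:: c; a; b; a]); first exact: Esym (coreI ab bc).
exact: (Ectx [::] [:: a] (R2 ab bc)).
Qed.

Lemma locIV a b : (a < b)%O -> E [:: a; b; b; a] [:: b; b; a; a].
Proof.
move=> ab; apply: (@cancelR a [:: a; b; b] [:: b; b; a]).
apply: (@Etr [:: a; b; a; b; a]); first exact: (Ectx [:: a] [:: a] (R4 ab)).
apply: (@Etr [:: b; a; a; b; a]); first exact: (Ectx [::] [:: b; a] (R3 ab)).
apply: (@Etr [:: b; a; b; a; a]); first exact: (Ectx [:: b; a] [::] (R3 ab)).
exact: (Ectx [::] [:: a; a] (Esym (R4 ab))).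
Qed.

Lemma locV a b : (a < b)%O -> E [:: b; b; a; a] [:: b; a; a; b].
Proof.
move=> ab; apply: (@Etr [:: b; a; b; a]); first exact: (Ectx [::] [:: a] (R4 ab)).
apply: cancelL.
apply: (@Etr [:: b; a; b; b; a]); first exact: (Ectx [::] [:: b; a] (R4 ab)).
apply: (@Etr [:: b; a; b; a; b]); first exact: (Ectx [:: b; a] [::] (R4 ab)).
exact: (Ectx [::] [:: a; b] (Esym (R4 ab))).
Qed.


Lemma rel_mem l r b : chs_rel sigma l r -> (b \in l) = (b \in r).
Proof.
case=> [[x y z *|x y z *|x y *|x y *]|[] x].
- by rewrite !inE; do ! case: (_ == _).
- by rewrite !inE; do ! case: (_ == _).
- by rewrite !inE; do ! case: (_ == _).
- by rewrite !inE; do ! case: (_ == _).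
- by rewrite mem_nseq inE (leq_trans _ (hs x)).
Qed.

Lemma loc l r a : chs_rel sigma l r -> a \in l -> exists l1 l2 r1 r2,
  [/\ l = l1 ++ a :: l2, r = r1 ++ a :: r2 & E (l1 ++ a :: a :: l2) (r1 ++ a :: a :: r2)].
Proof.
case=> [[x y z h1 h2|x y z h1 h2|x y h1|x y h1]|[] x].
- rewrite !inE => /or3P [/eqP->|/eqP->|/eqP->].
  + exists [::], [:: y; x], [::], [:: x; y]; split => //.
    exact: (Ectx [:: z] [::] (R1 h1 h2)).
  + exists [:: z], [:: x], [:: z; x], [::]; split => //.
    apply: (@Etr [:: z; y; x; y]); first exact: (Ectx [:: z] [::] (R4 h1)).
    exact: (Ectx [::] [:: y] (R1 h1 h2)).
  + exists [:: z; y], [::], [:: z], [:: y]; split => //; exact: locI.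
- rewrite !inE => /or3P [/eqP->|/eqP->|/eqP->].
  + exists [::], [:: x; y], [:: y], [:: x]; split => //; exact: locII.
  + exists [:: z], [:: y], [:: y; z], [::]; split => //; exact: locIII.
  + exists [:: z; x], [::], [::], [:: z; x]; split => //.
    apply: (@Etr [:: y; z; x; y]); first exact: (Ectx [::] [:: y] (R2 h1 h2)).
    exact: (Ectx [:: y] [::] (R2 h1 h2)).
- rewrite !inE => /orP [/eqP->|/orP [/eqP->|/eqP->]].
  + exists [:: x; y], [::], [:: y; x], [::]; split => //.
    exact: (Ectx [::] [:: x] (R3 h1)).
  + exists [:: x], [:: x], [::], [:: x; x]; split => //; exact: locIV.
  + exists [:: x; y], [::], [:: y; x], [::]; split => //.
    exact: (Ectx [::] [:: x] (R3 h1)).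
- rewrite !inE => /orP [/eqP->|/orP [/eqP->|/eqP->]].
  + exists [::], [:: y; x], [::], [:: x; y]; split => //.
    exact: (Ectx [:: y] [::] (R4 h1)).
  + exists [::], [:: y; x], [::], [:: x; y]; split => //.
    exact: (Ectx [:: y] [::] (R4 h1)).
  + exists [:: y; y], [::], [:: y], [:: y]; split => //; exact: locV.
- rewrite mem_nseq => /andP [_ /eqP ->].
  exists [::], (nseq (sigma x).-1 x), [::], [::]; split => //.
    by rewrite /= -[in LHS](prednK (ltnW (hs x))).
  rewrite /= -[x :: nseq _ x]/(nseq (sigma x).-1.+1 x) prednK; last exact: ltnW (hs x).
  exact: Econs (RP x).
Qed.

Lemma ins_both a p q p' q' : E (p ++ a :: a :: q) (p' ++ a :: a :: q') ->
  E (ins a (p ++ a :: q)) (ins a (p' ++ a :: q')).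
Proof.
move=> H; apply: Etr (ins_occ a p q) _; apply: Etr H _; apply: Esym; exact: ins_occ.
Qed.

Lemma ins_compat a (t1 t2 : seq A) : E t1 t2 -> E (ins a t1) (ins a t2).
Proof.
elim=> [u v l r H|w|w1 w2 _ IH|w1 w2 w3 _ IH1 _ IH2]; last first.
- exact: Etr IH2.
- exact: Esym.
- exact: Erefl.
case: (boolP (a \in u)) => [au|nau].
  case/splitPr: au => u1 u2; rewrite -!catA /=; apply: ins_both.
  by apply: (Eeq _ _ (Estep (u1 ++ a :: a :: u2) v H)); rewrite -!catA.
case: (boolP (a \in l)) => [al|nal].
  have [l1 [l2 [r1 [r2 [-> -> Hl]]]]] := loc H al.
  have e : forall (s1 s2 : seq A), u ++ (s1 ++ a :: s2) ++ v = (u ++ s1) ++ a :: (s2 ++ v).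
    by move=> s1 s2; rewrite -!catA.
  rewrite !e; apply: ins_both.
  by apply: (Eeq _ _ (Ectx u v Hl)); rewrite -!catA.
case: (boolP (a \in v)) => [av|nav].
  case/splitPr: av => v1 v2.
  have e : forall (s : seq A), u ++ s ++ v1 ++ a :: v2 = (u ++ s ++ v1) ++ a :: v2.
    by move=> s; rewrite -!catA.
  rewrite !e; apply: ins_both.
  by apply: (Eeq _ _ (Estep u (v1 ++ a :: a :: v2) H)); rewrite -!catA.
have nar : a \notin r by rewrite -(rel_mem a H).
rewrite !ins_notin ?mem_cat ?negb_or ?nau ?nal ?nar ?nav //.
exact: Estep.
Qed.


Lemma ins_at a w p q : w = p ++ a :: q -> E (ins a w) (p ++ a :: a :: q).
Proof. move=> ->; exact: ins_occ. Qed.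

Lemma comm_aux a b p m n :
  E (ins a (ins b (p ++ a :: m ++ b :: n))) (p ++ a :: a :: m ++ b :: b :: n) /\
  E (ins b (ins a (p ++ a :: m ++ b :: n))) (p ++ a :: a :: m ++ b :: b :: n).
Proof.
split.
- have h1 := @ins_at b (p ++ a :: m ++ b :: n) (p ++ a :: m) n (catA p (a :: m) (b :: n)).
  apply: Etr (ins_compat a h1) _.
  exact: (@ins_at a _ p (m ++ b :: b :: n) (esym (catA p (a :: m) (b :: b :: n)))).
- have h1 := @ins_at a (p ++ a :: m ++ b :: n) p (m ++ b :: n) erefl.
  apply: Etr (ins_compat b h1) _.
  apply: (Eeq _ _ (@ins_at b _ (p ++ a :: a :: m) n (catA p (a :: a :: m) (b :: n)))); by rewrite -?catA.
Qed.

Lemma ins_comm a b w : E (ins a (ins b w)) (ins b (ins a w)).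
Proof.
case: (eqVneq a b) => [<-|nab]; first exact: Erefl.
case: (boolP (a \in w)) => aw; last first.
  by rewrite (ins_notin aw) ins_notin ?ins_mem //; exact: Erefl.
case: (boolP (b \in w)) => bw; last first.
  by rewrite (ins_notin bw) (@ins_notin b (ins a w)) ?ins_mem //; exact: Erefl.
case/splitPr: aw bw => p q; rewrite mem_cat in_cons eq_sym (negbTE nab) /= => /orP [bp|bq].
  case/splitPr: bp => m n; rewrite -catA /=.
  have [h1 h2] := comm_aux b a m n q; exact: Etr h2 (Esym h1).
case/splitPr: bq => m n.
have [h1 h2] := comm_aux a b p m n; exact: Etr h1 (Esym h2).
Qed.

Definition T s w := foldr ins w s.

Lemma T_cat s t w : T (s ++ t) w = T s (T t w).
Proof. by rewrite /T foldr_cat. Qed.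

Lemma T_compat s (t1 t2 : seq A) : E t1 t2 -> E (T s t1) (T s t2).
Proof. by elim: s => //= c s IH H; apply: ins_compat; apply: IH. Qed.

Lemma ins_T a t w : E (ins a (T t w)) (T t (ins a w)).
Proof.
elim: t => [|c t IH] /=; first exact: Erefl.
apply: Etr (ins_comm a c _) _; exact: ins_compat.
Qed.

Lemma T_comm s t w : E (T s (T t w)) (T t (T s w)).
Proof.
elim: s => [|c s IH] /=; first exact: Erefl.
apply: Etr (ins_compat c IH) _; exact: ins_T.
Qed.

Lemma T_mem s w b : (b \in T s w) = (b \in w).
Proof. by elim: s => //= c s IH; rewrite ins_mem. Qed.

Lemma T_count s w b : count_mem b (T s w) = count_mem b w + (b \in w) * count_mem b s.
Proof.
elim: s => [|c s IH] /=; first by rewrite muln0 addn0.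
rewrite ins_count IH T_mem; case: (eqVneq c b) => [->|ncb].
  by case: (b \in w); rewrite /= ?mul1n ?mul0n; lia.
by rewrite /= ?mul0n ?addn0 ?add0n.
Qed.


Lemma T_split a s w : E (T s w) (T (filter (pred1 a) s) (T (filter (predC1 a) s) w)).
Proof.
elim: s => [|c s IH] /=; first exact: Erefl.
case: (eqVneq c a) => [->|nca] /=.
  exact: ins_compat.
apply: Etr (ins_compat c IH) _; exact: ins_T.
Qed.

Lemma T_nseq_occ a n p q : E (T (nseq n a) (p ++ a :: q)) (p ++ nseq n.+1 a ++ q).
Proof.
elim: n => [|n IH] /=; first exact: Erefl.
apply: Etr (ins_compat a IH) _; exact: ins_occ.
Qed.

Lemma T_nseq_notin a n w : a \notin w -> T (nseq n a) w = w.
Proof. by move=> aw; elim: n => //= n ->; rewrite ins_notin. Qed.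

Lemma collapse a k p q : E (p ++ nseq (k * (sigma a - 1)).+1 a ++ q) (p ++ a :: q).
Proof.
elim: k => [|k IH]; first exact: Erefl.
have e : (k.+1 * (sigma a - 1)).+1 = k * (sigma a - 1) + sigma a.
  by have := hs a; rewrite mulSn; lia.
rewrite e nseqD -catA.
apply: Etr _ IH.
rewrite -[(k * (sigma a - 1)).+1]addn1 nseqD -catA.
apply: (Eeq _ _ (Ectx (p ++ nseq (k * (sigma a - 1)) a) q (RP a))); by rewrite -!catA.
Qed.

Lemma cnt_fC a b s : count_mem b (filter (predC1 a) s) = if b == a then 0 else count_mem b s.
Proof.
elim: s => [|x s IH] /=; first by case: (b == a).
case: (eqVneq x a) => [->|xa] /=.
  by rewrite IH; case: (eqVneq b a) => // nba; rewrite eq_sym (negbTE nba).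
by rewrite IH; case: (eqVneq b a) => // ->; rewrite (negbTE xa).
Qed.

Lemma f1_nseq a s : filter (pred1 a) s = nseq (count_mem a s) a.
Proof.
elim: s => [|x s IH] //=; case: (eqVneq x a) => [->|xa] /=; first by rewrite IH.
by rewrite IH.
Qed.

Lemma T_id : forall n s w, size s <= n ->
  (forall b, b \in w -> (sigma b - 1) %| count_mem b s) -> E (T s w) w.
Proof.
elim=> [|n IH] s w.
  by rewrite leqn0 size_eq0 => /eqP -> _; exact: Erefl.
case: s => [|a s'] ss hd; first exact: Erefl.
set s := a :: s' in ss hd *.
apply: Etr (T_split a s w) _.
have h1 : E (T (filter (predC1 a) s) w) w.
  apply: IH.
    rewrite /s /= eqxx /= size_filter; apply: leq_trans (count_size _ _) _; by move: ss; rewrite /= ltnS.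
  move=> b bw; rewrite cnt_fC; case: eqP => _; first exact: dvdn0.
  exact: hd.
apply: Etr (T_compat _ h1) _.
rewrite f1_nseq.
case: (boolP (a \in w)) => aw; last by rewrite T_nseq_notin //; exact: Erefl.
have /dvdnP [k ek] := hd a aw.
case/splitPr: aw => p q.
rewrite ek; apply: Etr (T_nseq_occ _ _ _ _) _.
exact: collapse.
Qed.


Definition cc b (x1 x2 : seq A) := ((count_mem b x1 == 0) = (count_mem b x2 == 0)) /\
  (count_mem b x1 = count_mem b x2 %[mod sigma b - 1]).

Lemma cong_cc (R : seq A -> seq A -> Prop) b :
  (forall l r, R l r -> cc b l r) -> forall (x1 x2 : seq A), cong R x1 x2 -> cc b x1 x2.
Proof.
move=> HR x1 x2; elim=> [u v l r H|w|w1 w2 _ [IH1 IH2]|w1 w2 w3 _ [IH1 IH2] _ [IH3 IH4]].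
- have [h1 h2] := HR _ _ H; rewrite /cc !count_cat !addn_eq0 h1; split => //.
  by apply/eqP; rewrite eqn_modDl eqn_modDr; apply/eqP.
- by [].
- by [].
- by split; [rewrite IH1 IH3 | rewrite IH2 IH4].
Qed.

Lemma cc_pow b (f : A -> nat) l r : (forall x, 0 < f x) -> (forall x, f x = 1 %[mod sigma x - 1]) ->
  pow_rel f l r -> cc b l r.
Proof.
move=> f0 f1 [] x; rewrite /cc count_nseq /= addn0.
case: (eqVneq x b) => [->|]; last by rewrite mul0n.
rewrite /= mul1n; split; [exact: gtn_eqF | exact: f1].
Qed.

Lemma cc_of_eq b l r : count_mem b l = count_mem b r -> cc b l r.
Proof. by move=> e; rewrite /cc e. Qed.

Lemma cc_E b (x1 x2 : seq A) : E x1 x2 -> cc b x1 x2.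
Proof.
apply: cong_cc => l r [].
  by case=> *; apply: cc_of_eq => /=; lia.
apply: cc_pow => x; first exact: leq_trans (hs x).
by rewrite -{1}(subnK (ltnW (hs x))) modnDl.
Qed.

Lemma cc_Com b (x1 x2 : seq A) : ComEq sigma x1 x2 -> cc b x1 x2.
Proof.
apply: cong_cc => l r [].
  by case=> *; apply: cc_of_eq => /=; lia.
apply: cc_pow => x; first exact: leq_trans (hs x).
by rewrite -{1}(subnK (ltnW (hs x))) modnDl.
Qed.


Lemma lift (x1 x2 : seq A) : Ch2Eq x1 x2 -> exists s t, E (T s x1) (T t x2).
Proof.
elim=> [u v l r [H|[] a]|w|w1 w2 _ [s [t IH]]|w1 w2 w3 _ [s [t IH1]] _ [s' [t' IH2]]].
- by exists [::], [::]; exact: Estep (or_introl H).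
- exists [::], [:: a]; exact: Esym (ins_occ a u v).
- by exists [::], [::]; exact: Erefl.
- by exists t, s; exact: Esym.
- exists (s' ++ s), (t ++ t'); rewrite !T_cat.
  apply: Etr (T_compat s' IH1) _.
  apply: Etr (T_comm _ _ _) _.
  exact: T_compat.
Qed.

Lemma mem_cnt b w : (b \in w) = (count_mem b w != 0).
Proof. by rewrite -(negbK (b \in w)); congr (~~ _); apply/count_memPn/eqP. Qed.

Lemma cnt_u b s : count_mem b (flatten [seq nseq (sigma c - 2) c | c <- s]) = (sigma b - 2) * count_mem b s.
Proof.
elim: s => [|c s IH] /=; first by rewrite muln0.
rewrite count_cat IH count_nseq mulnDr; congr (_ + _).
rewrite /= mulnC; case: (eqVneq c b) => [->|]; last by rewrite !muln0.
by [].


Qed.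

Lemma main_sec (x1 x2 : seq A) : Ch2Eq x1 x2 -> ComEq sigma x1 x2 -> E x1 x2.
Proof.
move=> h2 hc; have [s [t H]] := lift h2.
set u := flatten [seq nseq (sigma c - 2) c | c <- s].
have em : forall b, (sigma b - 2) * count_mem b s + count_mem b s = (sigma b - 1) * count_mem b s.
  move=> b; rewrite -{2}[count_mem b s]mul1n -mulnDl; congr (_ * _); have := hs b; lia.
apply: (@Etr (T (u ++ s) x1)).
  apply: Esym; apply: (@T_id _ _ _ (leqnn _)) => b _.
  by rewrite count_cat cnt_u em dvdn_mulr.
rewrite T_cat; apply: Etr (T_compat u H) _; rewrite -T_cat.
apply: (@T_id _ _ _ (leqnn _)) => b by2.
have [hz hm] := cc_Com b hc.
have bx1 : b \in x1 by rewrite mem_cnt hz -mem_cnt.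
have [_ hm2] := cc_E b H.
rewrite !T_count bx1 by2 !mul1n in hm2.
have e3 : count_mem b s = count_mem b t %[mod sigma b - 1].
  apply/eqP; rewrite -(eqn_modDl (count_mem b x2)); apply/eqP.
  by rewrite -modnDml -hm modnDml hm2.
rewrite count_cat cnt_u /dvdn -modnDmr -e3 modnDmr em modnMr.
by [].
Qed.

End Main.

Theorem mainTheorem2 (d : Order.disp_t) (A : finOrderType d) (sigma : A -> nat)
  (hsigma : forall a : A, (2 <= sigma a)%N) (x y : seq A) :
  Ch2Eq x y -> ComEq sigma x y -> ChEq sigma x y.
Proof. exact: main_sec. Qed.
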